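(* There exist a finite action set $\mathcal{A}$, a utility function $u:\mathcal{A}\times\{0,1\}\to[-1,1]$ and a constant $c>0$ such that for infinitely many horizons $T$ there are outcomes $\mathbf{x}\in\{0,1\}^T$ and forecasts $\mathbf{p}\in[0,1]^T$ with $$\mathrm{Reg}(\mathbf{p},\mathbf{x})\le -cT \quad\text{and}\quad \mathrm{AgentReg}_u(\mathbf{p},\mathbf{x})\ge cT.$$ (That is, $\mathrm{Reg}(\mathbf p,\mathbf x)=-\Omega(T)$ while $\mathrm{AgentReg}_u(\mathbf p,\mathbf x)=\Omega(T)$.)
   Context: Binary setting. For outcomes $\mathbf{x}=(x_1,\dots,x_T)\in\{0,1\}^T$ and forecasts $\mathbf{p}=(p_1,\dots,p_T)\in[0,1]^T$, the base rate is $\beta=\frac1T\sum_{t=1}^T x_t$. For a scoring rule $\ell:[0,1]\times\{0,1\}\to\mathbb{R}$, $\mathrm{Reg}_\ell(\mathbf p,\mathbf x)=\sum_{t=1}^T\ell(p_t,x_t)-\sum_{t=1}^T\ell(\beta,x_t)$. The Brier score is $\ell_{sq}(p,x)=(x-p)^2$ and $\mathrm{Reg}(\mathbf p,\mathbf x)=\mathrm{Reg}_{\ell_{sq}}(\mathbf p,\mathbf x)$. An agent with finite action set $\mathcal A$ and utility $u:\mathcal A\times\{0,1\}\to[-1,1]$ responds to a forecast $p$ with an action $a(p)\in\arg\max_{a\in\mathcal A}\mathbb{E}_{x\sim\mathrm{Ber}(p)}[u(a,x)]$ (fixed tie-breaking), and $\mathrm{AgentReg}_u(\mathbf p,\mathbf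 x)=\sum_{t=1}^T u(a(\beta),x_t)-\sum_{t=1}^T u(a(p_t),x_t)$. *)

(* Defs.v *)
From mathcomp Require Import all_boot all_order all_algebra.
From mathcomp Require Import reals.
Set Implicit Arguments. Unset Strict Implicit. Unset Printing Implicit Defensive.
Import Order.TTheory GRing.Theory Num.Theory.
Local Open Scope ring_scope.

Section Defs.
Variable R : realType.

Definition b2r (x : bool) : R := if x then 1 else 0.

Definition base_rate (T : nat) (x : 'I_T -> bool) : R :=
  (\sum_(t < T) b2r (x t)) / T%:R.

Definition brier (p : R) (x : bool) : R := (b2r x - p) ^+ 2.

Definition Reg_ell (ell : R -> bool -> R) (T : nat) (p : 'I_T -> R)
  (x : 'I_T -> bool) : R :=
  \sum_(t < T) ell (p t) (x t) - \sum_(t < T) ell (base_rate x) (x t).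

Definition Reg (T : nat) (p : 'I_T -> R) (x : 'I_T -> bool) : R :=
  Reg_ell brier p x.

Definition exp_util (A : Type) (u : A -> bool -> R) (q : R) (a : A) : R :=
  q * u a true + (1 - q) * u a false.

(* resp is a best response rule (with some fixed tie-breaking) for u:
   for every forecast q in [0,1], resp q maximizes expected utility. *)
Definition best_response (A : finType) (u : A -> bool -> R) (resp : R -> A) :=
  forall q : R, 0 <= q <= 1 -> forall a' : A, exp_util u q a' <= exp_util u q (resp q).

Definition AgentReg (A : Type) (u : A -> bool -> R) (resp : R -> A)
  (T : nat) (p : 'I_T -> R) (x : 'I_T -> bool) : R :=
  \sum_(t < T) u (resp (base_rate x)) (x t) - \sum_(t < T) u (resp (p t)) (x t).

End Defs.

(* Main.v *)
Require Import Defs.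
From mathcomp Require Import all_boot all_order all_algebra.
From mathcomp Require Import reals.
From mathcomp Require Import ring lra.
Import Order.TTheory GRing.Theory Num.Theory.
Local Open Scope ring_scope.

Lemma sum3 (R : realType) (n : nat) (f : bool -> R) :
  \sum_(t < (3*n)%N) f (t < 2*n)%N = (2*n)%:R * f true + n%:R * f false.
Proof.
rewrite -(big_mkord xpredT (fun t => f (t < 2*n)%N)).
rewrite (big_cat_nat (n:=(2*n)%N)) //=; last by rewrite leq_mul2r leqnSn orbT.
rewrite (eq_big_nat _ _ (F2 := fun _ => f true)); last first.
  by move=> i /andP[_ ->].
rewrite [X in _ + X](eq_big_nat _ _ (F2 := fun _ => f false)); last first.
  by move=> i /andP[h _]; rewrite ltnNge h.
rewrite !sumr_const_nat subn0 -mulnBl !mulr_natl.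
by have -> : (3 - 2 = 1)%N by [] ; rewrite mul1n.
Qed.

Theorem theorem3p1 (R : realType) :
  exists (A : finType) (u : A -> bool -> R) (resp : R -> A) (c : R),
    (forall a x, -1 <= u a x <= 1) /\
    best_response u resp /\
    0 < c /\
    forall N : nat, exists T : nat, (N <= T)%N /\
      exists (x : 'I_T -> bool) (p : 'I_T -> R),
        (forall t, 0 <= p t <= 1) /\
        Reg p x <= - (c * T%:R) /\
        c * T%:R <= AgentReg u resp p x.
Proof.
pose u := fun (a x : bool) => if a then (if x then 1 else -1) else (0:R).
exists bool, u, (fun q : R => 1/2 < q), (1/18).
split; first by move=> [] [] /=; rewrite /u; lra.
split.
  move=> q /andP[q0 q1] a'; rewrite /exp_util /u.
  case: a'; case: ltrP => h; lra.
split; first lra.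
move=> N; set n := N.+1; exists (3 * n)%N; split.
  by rewrite /n (leq_trans (leqnSn N)) // leq_pmull.
pose x := fun t : 'I_(3*n) => (t < 2*n)%N.
pose p := fun t : 'I_(3*n) => if x t then 1/2 else (0:R).
exists x, p; split.
  by move=> t; rewrite /p; case: (x t); lra.
have hn : (0:R) < n%:R by rewrite ltr0n.
have hb : base_rate R x = 2/3.
  rewrite /base_rate /x (sum3 _ _ (fun b => b2r R b)) /b2r !natrM.
  field; lra.
split.
  rewrite /Reg /Reg_ell hb /p /x (sum3 _ _ (fun b => brier (if b then 1/2 else 0) b)).
  rewrite (sum3 _ _ (fun b => brier (2/3) b)) /brier /b2r !natrM /=.
  lra.
rewrite /AgentReg hb /p /x (sum3 _ _ (fun b => u (1/2 < 2/3) b)).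
rewrite (sum3 _ _ (fun b => u (1/2 < (if b then 1/2 else 0)) b)).
have -> : (1/2 < 2/3 :> R) = true by apply/idP; lra.
rewrite ltxx.
have -> : (1/2 < 0 :> R) = false by apply/negbTE; rewrite -leNgt; lra.
rewrite /u !natrM /=; lra.
Qed.
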